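(* Let $\mathcal{X}=\{1,\dots,n\}$ with $n\ge 2$, let $\pi$ be a strictly positive probability distribution on $\mathcal{X}$, let $P$ be a $\pi$-reversible transition matrix, and fix $\alpha\in(0,1)$. With $g$ and $A_\alpha(S)$ as defined below, and identifying a singleton $\{x\}$ with $x$, $$\operatorname*{argmin}_{S\neq\mathcal{X},\,|S|=1}\|A_\alpha(S)-\Pi\|_{F,\pi}^2=\operatorname*{argmax}_{S\neq\mathcal{X},\,|S|=1}g(S)=\operatorname*{argmax}_{x\in\mathcal{X}}\frac{1-P(x,x)}{1-\pi(x)}.$$
   Context: $S'=\mathcal{X}\setminus S$; $g(S)=\frac{1}{\pi(S)\pi(S')}\sum_{x\in S,\,y\in S'}\pi(x)P(x,y)$. $\pi$-reversible means $\pi(x)P(x,y)=\pi(y)P(y,x)$. For $S\neq\emptyset,\mathcal{X}$, $A_\alpha(S)=\alpha P+(1-\alpha)G_S$ where $G_S(x,y)=\pi(y)/\pi(\mathcal{O}(x))$ if $y\in\mathcal{O}(x)$ and $0$ otherwise, $\mathcal{O}(x)\in\{S,S'\}$ the block containing $x$. $\Pi$ is the matrix with every row equal to $\pi$; $\|M\|_{F,\pi}^2=\operatorname{Tr}(M^*M)$ with $M^*(x,y)=\pi(y)M(y,x)/\pi(x)$. *)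

(* Defs.v *)
From mathcomp Require Import all_boot all_order all_algebra.
Set Implicit Arguments. Unset Strict Implicit. Unset Printing Implicit Defensive.
Import Order.TTheory GRing.Theory Num.Theory.
Local Open Scope ring_scope.

Section Defs.
Variables (R : realFieldType) (n : nat).

Definition piS (pi : 'I_n -> R) (S : {set 'I_n}) : R := \sum_(x in S) pi x.

Definition gS (pi : 'I_n -> R) (P : 'M[R]_n) (S : {set 'I_n}) : R :=
  (piS pi S * piS pi (~: S))^-1 *
  \sum_(x in S) \sum_(y in ~: S) pi x * P x y.

Definition blockOf (S : {set 'I_n}) (x : 'I_n) : {set 'I_n} :=
  if x \in S then S else ~: S.

Definition GS (pi : 'I_n -> R) (S : {set 'I_n}) : 'M[R]_n :=
  \matrix_(x, y) (if y \in blockOf S x then pi y / piS pi (blockOf S x) else 0).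

Definition Aalpha (pi : 'I_n -> R) (P : 'M[R]_n) (alpha : R) (S : {set 'I_n})
  : 'M[R]_n := alpha *: P + (1 - alpha) *: GS pi S.

Definition PiM (pi : 'I_n -> R) : 'M[R]_n := \matrix_(x, y) pi y.

Definition adjpi (pi : 'I_n -> R) (M : 'M[R]_n) : 'M[R]_n :=
  \matrix_(x, y) (pi y * M y x / pi x).

Definition frob2 (pi : 'I_n -> R) (M : 'M[R]_n) : R := \tr (adjpi pi M *m M).

End Defs.

Definition is_argmin (R : realFieldType) (T : finType) (D : pred T) (f : T -> R)
  (x : T) : bool := D x && [forall y, D y ==> (f x <= f y)].
Definition is_argmax (R : realFieldType) (T : finType) (D : pred T) (f : T -> R)
  (x : T) : bool := D x && [forall y, D y ==> (f y <= f x)].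

(* Main.v *)
Require Import Defs.
From mathcomp Require Import all_boot all_order all_algebra.
From mathcomp Require Import ring lra.
Import Order.TTheory GRing.Theory Num.Theory.
Local Open Scope ring_scope.

Section Help.
Variables (R : realFieldType) (n : nat) (pi : 'I_n -> R) (P : 'M[R]_n).
Hypothesis pi_pos : forall x, 0 < pi x.
Hypothesis pi_sum : \sum_x pi x = 1.
Hypothesis P_row : forall x, \sum_y P x y = 1.
Hypothesis P_rev : forall x y, pi x * P x y = pi y * P y x.

Lemma sum_split (S : {set 'I_n}) (F : 'I_n -> R) :
  \sum_j F j = \sum_(j in S) F j + \sum_(j in ~: S) F j.
Proof.
rewrite (bigID (mem S)) /=; congr (_ + _); apply: eq_bigl => j; by rewrite ?inE.
Qed.

Lemma sumC (S : {set 'I_n}) (F : 'I_n -> R) :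
  \sum_(j in ~: S) F j = \sum_j F j - \sum_(j in S) F j.
Proof. rewrite (sum_split S F); ring. Qed.

Lemma piS_ind (B : {set 'I_n}) (F : 'I_n -> R) :
  \sum_i F i * (i \in B)%:R = \sum_(i in B) F i.
Proof.
rewrite [RHS]big_mkcond /=; apply: eq_bigr => i _; case: (i \in B) => /=; ring.
Qed.

Lemma piSC (S : {set 'I_n}) : piS pi (~: S) = 1 - piS pi S.
Proof. by rewrite /piS sumC pi_sum. Qed.

Definition cc (B : {set 'I_n}) (i : 'I_n) : R := (i \in B)%:R / piS pi B - 1.

Lemma inner2 (B : {set 'I_n}) : piS pi B != 0 ->
  \sum_i pi i * cc B i ^+ 2 = (piS pi B)^-1 - 1.
Proof.
move=> hB; set p := piS pi B.
transitivity (\sum_i ((p^-1 * p^-1 - 2 * p^-1) * (pi i * (i \in B)%:R) + pi i)).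
  apply: eq_bigr => i _; rewrite /cc; case: (i \in B) => /=; ring.
rewrite big_split /= -mulr_sumr pi_sum piS_ind -/(piS pi B) -/p; field; exact: hB.
Qed.

Lemma inner1 (B : {set 'I_n}) j : piS pi B != 0 ->
  \sum_i (P j i - pi i) * cc B i = (\sum_(i in B) P j i) / piS pi B - 1.
Proof.
move=> hB; set p := piS pi B.
transitivity (\sum_i (p^-1 * (P j i * (i \in B)%:R) - p^-1 * (pi i * (i \in B)%:R)
    - P j i + pi i)).
  apply: eq_bigr => i _; rewrite /cc; case: (i \in B) => /=; ring.
rewrite big_split /= !sumrB -!mulr_sumr !piS_ind P_row pi_sum -/(piS pi B) -/p; field; exact: hB.
Qed.


Lemma entry (alpha : R) S j i :
  (Aalpha pi P alpha S - PiM pi) j i =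
  alpha * (P j i - pi i) + (1 - alpha) * (pi i * cc (blockOf S j) i).
Proof.
rewrite /Aalpha /GS /PiM /cc !mxE; case: (i \in blockOf S j) => /=; ring.
Qed.

Definition Kc := \sum_i \sum_j pi j / pi i * (P j i - pi i) ^+ 2.

Lemma frob_formula (alpha : R) S : 0 < piS pi S -> 0 < piS pi (~: S) ->
  frob2 pi (Aalpha pi P alpha S - PiM pi) =
  alpha ^+ 2 * Kc + 2 * alpha * (1 - alpha) * (1 - gS pi P S) + (1 - alpha) ^+ 2.
Proof.
move=> hS hS'.
have hS0 : piS pi S != 0 by rewrite gt_eqF.
have hS0' : piS pi (~: S) != 0 by rewrite gt_eqF.
set T1 := \sum_i \sum_j pi j * (P j i - pi i) * cc (blockOf S j) i.
set T2 := \sum_i \sum_j pi j * pi i * cc (blockOf S j) i ^+ 2.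
have E : frob2 pi (Aalpha pi P alpha S - PiM pi) =
   alpha ^+ 2 * Kc + 2 * alpha * (1 - alpha) * T1 + (1 - alpha) ^+ 2 * T2.
  rewrite /frob2 /mxtrace /Kc /T1 /T2 !mulr_sumr -!big_split /=.
  apply: eq_bigr => i _; rewrite mxE !mulr_sumr -!big_split /=.
  apply: eq_bigr => j _; rewrite !mxE.
  have := pi_pos i; rewrite lt0r => /andP [hi _].
  have hb : piS pi (blockOf S j) != 0 by rewrite /blockOf; case: (j \in S).
  rewrite /cc; case: (i \in blockOf S j) => /=; field; rewrite ?hi ?hb //.
have blkS : forall j, j \in S -> blockOf S j = S by move=> j jS; rewrite /blockOf jS.
have blkC : forall j, j \in ~: S -> blockOf S j = ~: S.
  by move=> j; rewrite inE /blockOf => /negbTE ->.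
have sumB : forall F : {set 'I_n} -> 'I_n -> R,
   \sum_j F (blockOf S j) j = \sum_(j in S) F S j + \sum_(j in ~: S) F (~: S) j.
  move=> F; rewrite (sum_split S); congr (_ + _); apply: eq_bigr => j jS.
    by rewrite blkS. by rewrite blkC.
have T2E : T2 = 1.
  rewrite /T2 exchange_big /=.
  transitivity (\sum_j pi j * ((piS pi (blockOf S j))^-1 - 1)).
    apply: eq_bigr => j _; rewrite -inner2; last by rewrite /blockOf; case: (j \in S).
    rewrite mulr_sumr; apply: eq_bigr => i _; ring.
  rewrite (sumB (fun B j => pi j * ((piS pi B)^-1 - 1))) /=.
  rewrite -!mulr_suml -/(piS pi S) -/(piS pi (~: S)) piSC.
  rewrite piSC in hS0'; field; by rewrite hS0 hS0'.
set Q := \sum_(x in S) \sum_(y in ~: S) pi x * P x y.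
have gE : gS pi P S = (piS pi S * piS pi (~: S))^-1 * Q by [].
have T1E : T1 = (piS pi S - Q) / piS pi S + (piS pi (~: S) - Q) / piS pi (~: S) - 1.
  rewrite /T1 exchange_big /=.
  transitivity (\sum_j (pi j * \sum_(i in blockOf S j) P j i) / piS pi (blockOf S j) - 1).
    rewrite -[1]pi_sum -sumrB; apply: eq_bigr => j _.
    have -> : pi j * (\sum_(i in blockOf S j) P j i) / piS pi (blockOf S j) - pi j
       = pi j * ((\sum_(i in blockOf S j) P j i) / piS pi (blockOf S j) - 1) by ring.
    rewrite -inner1; last by rewrite /blockOf; case: (j \in S).
    rewrite mulr_sumr; apply: eq_bigr => i _; ring.
  rewrite (sumB (fun B j => (pi j * \sum_(i in B) P j i) / piS pi B)) /=.
  rewrite -!mulr_suml.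
  have a : \sum_(j in S) pi j * \sum_(i in S) P j i = piS pi S - Q.
    rewrite /Q /piS -sumrB; apply: eq_bigr => j _.
    rewrite -mulr_sumr.
    rewrite sumC P_row; ring.
  have b : \sum_(j in ~: S) pi j * \sum_(i in ~: S) P j i = piS pi (~: S) - Q.
    have -> : Q = \sum_(j in ~: S) \sum_(i in S) pi j * P j i.
      rewrite /Q exchange_big /=; apply: eq_bigr => i _; apply: eq_bigr => j _.
      by rewrite P_rev.
    rewrite /piS -sumrB; apply: eq_bigr => j _.
    rewrite -mulr_sumr.
    rewrite sumC P_row; ring.
  by rewrite a b.
rewrite E T2E T1E gE piSC.
rewrite piSC in hS0'; field; by rewrite hS0 hS0'.
Qed.

End Help.

Theorem corollary4p9 (R : realFieldType) (n : nat) (pi : 'I_n -> R)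
  (P : 'M[R]_n) (alpha : R) :
  (2 <= n)%N ->
  (forall x, 0 < pi x) -> \sum_x pi x = 1 ->
  (forall x y, 0 <= P x y) -> (forall x, \sum_y P x y = 1) ->
  (forall x y, pi x * P x y = pi y * P y x) ->
  0 < alpha < 1 ->
  let cand := fun S : {set 'I_n} => (S != [set: 'I_n]) && (#|S| == 1%N) in
  [set S | is_argmin cand (fun S => frob2 pi (Aalpha pi P alpha S - PiM pi)) S]
    = [set S | is_argmax cand (gS pi P) S]
  /\
  [set S | is_argmax cand (gS pi P) S]
    = [set [set x] | x in [set x | is_argmax predT
                         (fun x : 'I_n => (1 - P x x) / (1 - pi x)) x]].
Proof.
move=> hn pos sum1 Pge row rev /andP[a0 a1] cand.
have candT : forall x, cand [set x].
  move=> x; rewrite /cand cards1 eqxx andbT; apply/eqP => h.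
  have := cardsT 'I_n; rewrite -h cards1 card_ord => en.
  by move: hn; rewrite -en.
have candP : forall S, cand S -> exists x, S = [set x].
  by move=> S /andP[_ /cards1P].
have p1 : forall x, piS pi [set x] = pi x by move=> x; rewrite /piS big_set1.
have p2 : forall x, 0 < piS pi (~: [set x]).
  move=> x.
  have : (0 < #|~: [set x]|)%N by rewrite cardsC1 card_ord -subn1 subn_gt0.
  case/card_gt0P => y yin.
  rewrite /piS (bigD1 y) //=; apply: (lt_le_trans (pos y)); rewrite lerDl.
  by apply: sumr_ge0 => k _; exact: ltW.
have gE : forall x, gS pi P [set x] = (1 - P x x) / (1 - pi x).
  move=> x; rewrite /gS.
  have q : piS pi (~: [set x]) = 1 - pi x by rewrite piSC // p1.
  have hp2 := p2 x; rewrite q in hp2.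
  rewrite q p1 big_set1 -mulr_sumr sumC row big_set1.
  have := pos x; rewrite lt0r => /andP[hx _].
  field; rewrite hx andbT; exact: lt0r_neq0.
have k0 : 0 < 2 * alpha * (1 - alpha).
  by apply: mulr_gt0; [apply: mulr_gt0 | rewrite subr_gt0].
split.
  apply/setP => S; rewrite !inE /is_argmin /is_argmax.
  case: (boolP (cand S)) => cS //=.
  apply: eq_forallb => T; case: (boolP (cand T)) => cT //=.
  have [x ->] := candP _ cS; have [y ->] := candP _ cT.
  rewrite !(@frob_formula _ _ _ _ pos sum1 row rev) ?p1 ?pos ?p2 //.
  by rewrite lerD2r lerD2l ler_pM2l // lerD2l lerN2.
apply/setP => S; rewrite !inE; apply/idP/imsetP.
  move=> /andP[cS /forallP H].
  have [x eS] := candP _ cS; subst S.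
  exists x => //; rewrite inE /is_argmax /=; apply/forallP => y.
  by have := H [set y]; rewrite candT /= !gE.
case=> x; rewrite inE => /andP[_ /forallP H] ->.
rewrite /is_argmax candT /=; apply/forallP => T; apply/implyP => cT.
have [y ->] := candP _ cT; rewrite !gE; exact: H.
Qed.
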